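(* Let $(M,d)$ be a metric space, $\mathsf{P}\subseteq M$ a set of $n$ points, and $1\le\ell\le k\le n$ integers; put $m=\lfloor k/\ell\rfloor$. Let $Q=\{q_1,\dots,q_m\}$ be the output of Gonzalez's algorithm on $\mathsf{P}$ with $m$ centers, and let $C\subseteq\mathsf{P}$ be any set with $|C|=k$ and $C\supseteq\bigcup_{i=1}^m N_{\mathsf{P}}(q_i,\ell)$. Let $r_{\mathrm{opt}}=\min_{C'\subseteq\mathsf{P},|C'|=k}\max_{p\in\mathsf{P}} d_{C'}(p,\ell)$. Then $\max_{p\in\mathsf{P}} d_C(p,\ell)\le 4\,r_{\mathrm{opt}}$, and if moreover $\ell\mid k$ then $\max_{p\in\mathsf{P}} d_C(p,\ell)\le 3\,r_{\mathrm{opt}}$.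
   Context: Gonzalez's algorithm with $m$ centers: $q_1\in\mathsf{P}$ is arbitrary, and for $i=2,\dots,m$, $q_i$ is a point of $\mathsf{P}$ maximizing $d(p,\{q_1,\dots,q_{i-1}\})$ over $p\in\mathsf{P}$. For a finite $S\subseteq M$ and $1\le i\le|S|$, $d_S(p,i)$ is the radius of the smallest closed ball centered at $p$ containing at least $i$ points of $S$; nearest neighbors are ordered lexicographically by $(d(p,s),\text{index of }s)$ (points of $\mathsf{P}=\{p_1,\dots,p_n\}$ are indexed) and $N_S(p,i)$ is the set of the first $i$ points of $S$ in this order, $|N_S(p,i)|=i$. The quantity $\max_{p\in\mathsf{P}} d_C(p,\ell)$ is the fault-tolerant $k$-center cost of $C$. *)

(* Defs.v *)
From HB Require Import structures.
From mathcomp Require Import all_boot all_order all_algebra.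
Set Implicit Arguments. Unset Strict Implicit. Unset Printing Implicit Defensive.
Import Order.TTheory GRing.Theory Num.Theory.
Local Open Scope ring_scope.

Definition is_metric (R : realFieldType) (T : Type) (d : T -> T -> R) : Prop :=
  [/\ forall x, d x x = 0,
      forall x y, d x y = 0 -> x = y,
      forall x y, d x y = d y x &
      forall x y z, d x z <= d x y + d y z].

Section FT.
Variables (R : realFieldType) (T : Type) (d : T -> T -> R) (n : nat)
          (p : 'I_n -> T).
(* The point set P = {p_0, ..., p_{n-1}}, points indexed by 'I_n; subsets of P
   are represented by sets of indices. *)

Definition ball_count (S : {set 'I_n}) (x : T) (r : R) : nat :=
  #|[set s in S | d x (p s) <= r]|.

(* d_S(x,i): radius of the smallest closed ball centred at x containing at
   least i points of S (the minimum is attained at one of the distances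
   d(x,s), s in S).  The default of the big min, the largest distance to S,
   is itself a candidate whenever 1 <= i <= |S|. *)
Definition dS (S : {set 'I_n}) (x : T) (i : nat) : R :=
  \big[Order.min / \big[Order.max/0]_(s in S) d x (p s)]_(s in S |
      (i <= ball_count S x (d x (p s)))%N) d x (p s).

Definition lex_lt (x : T) (s t : 'I_n) : bool :=
  (d x (p s) < d x (p t)) || ((d x (p s) == d x (p t)) && (s < t)%N).

(* N_S(x,i): the first i points of S in the lexicographic order *)
Definition NS (S : {set 'I_n}) (x : T) (i : nat) : {set 'I_n} :=
  [set s in S | (#|[set t in S | lex_lt x t s]| < i)%N].

Definition ft_cost (C : {set 'I_n}) (l : nat) : R :=
  \big[Order.max/0]_(y < n) dS C (p y) l.

(* d(x, {q_0, ..., q_{j-1}}) for j >= 1 (default d(x,q_0) is a member) *)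
Definition dist_prefix (q : nat -> 'I_n) (j : nat) (x : T) : R :=
  \big[Order.min / d x (p (q 0%N))]_(i < j) d x (p (q i)).

Definition gonzalez (q : nat -> 'I_n) (m : nat) : Prop :=
  forall j : nat, (0 < j)%N -> (j < m)%N ->
    forall y : 'I_n, dist_prefix q j (p y) <= dist_prefix q j (p (q j)).

End FT.

(* Main.v *)
Require Import Defs.
From HB Require Import structures.
From mathcomp Require Import all_boot all_order all_algebra.
From mathcomp Require Import lra zify.
Import Order.TTheory GRing.Theory Num.Theory.
Local Open Scope ring_scope.

Lemma ex_maxR (R : realFieldType) (I : finType) (A : {pred I}) (f : I -> R) (a : I) :
  a \in A -> exists2 s, s \in A & forall t, t \in A -> f t <= f s.
Proof.
move=> aA; case: (arg_maxP f aA) => s sA H; exists s => // t tA; exact: H.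
Qed.

Lemma ball_count_mono (R : realFieldType) (T : Type) (d : T -> T -> R) (n : nat)
  (p : 'I_n -> T) (S : {set 'I_n}) x r1 r2 :
  r1 <= r2 -> (ball_count d p S x r1 <= ball_count d p S x r2)%N.
Proof.
move=> h; apply: subset_leq_card; apply/subsetP => s; rewrite !inE.
case/andP=> -> h1 /=; exact: le_trans h1 h.
Qed.

Lemma dS_ball (R : realFieldType) (T : Type) (d : T -> T -> R) (n : nat)
  (p : 'I_n -> T) (S : {set 'I_n}) x l r :
  (l <= #|S|)%N -> dS d p S x l <= r -> (l <= ball_count d p S x r)%N.
Proof.
move=> hS; apply: contraTT; rewrite -ltnNge -ltNge => hlt.
apply: lt_bigmin.
- have [s sS hs] : exists2 s, s \in S & r < d x (p s).
    apply/exists_inP; apply: contraLR hlt; rewrite negb_exists_in -leqNgt.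
    move/forall_inP => H; apply: leq_trans hS _; apply: subset_leq_card.
    apply/subsetP => s sS; rewrite inE sS /=; rewrite leNgt; exact: H.
  apply: lt_le_trans hs _; exact: (le_bigmax_cond 0 (P := fun s => s \in S) (fun s => d x (p s)) sS).
- move=> s /andP[sS hl]; rewrite ltNge; apply/negP => hs.
  have := @ball_count_mono _ _ d _ p S x _ _ hs; lia.
Qed.

Lemma lex_trans (R : realFieldType) (T : Type) (d : T -> T -> R) (n : nat)
  (p : 'I_n -> T) x s t u :
  lex_lt d p x s t -> lex_lt d p x t u -> lex_lt d p x s u.
Proof.
rewrite /lex_lt.
case/orP=> [h1|/andP[/eqP e1 h1]]; case/orP=> [h2|/andP[/eqP e2 h2]].
- by rewrite (lt_trans h1 h2).
- by rewrite -e2 h1.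
- by rewrite e1 h2.
- by rewrite e1 e2 eqxx (ltn_trans h1 h2) orbT.
Qed.

Lemma lex_irr (R : realFieldType) (T : Type) (d : T -> T -> R) (n : nat)
  (p : 'I_n -> T) x s : lex_lt d p x s s = false.
Proof. by rewrite /lex_lt ltxx ltnn andbF. Qed.

Lemma NS_card (R : realFieldType) (T : Type) (d : T -> T -> R) (n : nat)
  (p : 'I_n -> T) x l : (l <= n)%N -> (l <= #|NS d p setT x l|)%N.
Proof.
move=> ln; rewrite leqNgt; apply/negP => hN.
set N := NS d p setT x l in hN.
pose rk u := #|[set t in setT | lex_lt d p x t u]|.
have [u0 u0N] : exists u0, u0 \in ~: N.
  apply/set0Pn; rewrite -card_gt0 cardsCs card_ord setCK.
  have := max_card N; rewrite card_ord. idtac. lia.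
case: (arg_minnP rk u0N) => u uN umin.
have sub : [set t in setT | lex_lt d p x t u] \subset N.
  apply/subsetP => t; rewrite !inE /= => tu; apply/negPn/negP => tN.
  have tN' : t \in ~: N by rewrite in_setC /N /NS !inE /=.
  have hle : (rk u <= rk t)%N := umin t tN'.
  have : (rk t < rk u)%N.
    apply: proper_card; apply/properP; split.
      apply/subsetP => v; rewrite !inE /= => vt; exact: (@lex_trans _ _ d _ p x v t u vt tu).
    by exists t; rewrite !inE /= ?lex_irr.
  by rewrite ltnNge hle.
have uN' : u \in ~: N := uN.
have h := subset_leq_card sub.
move: uN'; rewrite in_setC /N /NS !inE /= => /negP; apply.
exact: leq_ltn_trans h hN.
Qed.

Lemma NS_close (R : realFieldType) (T : Type) (d : T -> T -> R) (n : nat)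
  (p : 'I_n -> T) (C' : {set 'I_n}) x l r s :
  (l <= ball_count d p C' x r)%N -> s \in NS d p setT x l -> d x (p s) <= r.
Proof.
move=> hb; rewrite inE in_setT /= => hlt; rewrite leNgt; apply/negP => hs.
move: hlt; rewrite ltnNge => /negP; apply.
apply: (leq_trans hb); apply: subset_leq_card; apply/subsetP => t.
rewrite !inE /= => /andP[_ ht]; rewrite /lex_lt (le_lt_trans ht hs) //.
Qed.

Theorem theorem3 (R : realFieldType) (T : Type) (d : T -> T -> R)
  (n : nat) (p : 'I_n -> T) (l k : nat) (q : nat -> 'I_n) (C : {set 'I_n}) :
  is_metric d -> injective p ->
  (1 <= l)%N -> (l <= k)%N -> (k <= n)%N ->
  gonzalez d p q (k %/ l) ->
  #|C| = k ->
  (forall i : nat, (i < k %/ l)%N -> NS d p setT (p (q i)) l \subset C) ->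
  forall C' : {set 'I_n}, #|C'| = k ->
    ft_cost d p C l <= 4%:R * ft_cost d p C' l /\
    ((l %| k)%N -> ft_cost d p C l <= 3%:R * ft_cost d p C' l).
Proof.
move=> [d0 dE dsym dtri] pinj l1 lk kn gz hC hNC C' hC'.
set m := (k %/ l)%N.
set r := ft_cost d p C' l.
have hr y : dS d p C' (p y) l <= r := le_bigmax 0 (fun y => dS d p C' (p y) l) y.
have r0 : 0 <= r := bigmax_ge_id _ _ _ _.
have hbC y : (l <= ball_count d p C' (p y) r)%N.
  by apply: (@dS_ball _ _ d _ p C' (p y) l r); rewrite ?hC'.
suff H3 : ft_cost d p C l <= 3%:R * r.
  split => [|_] //; apply: (le_trans H3); lra.
apply: bigmax_le => [|y _]; first lra.
case: (boolP [exists i : 'I_m, d (p y) (p (q i)) <= 2%:R * r]).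
- case/existsP => i hi.
  set z := q i.
  have hN := @NS_card _ _ d _ p (p z) l (leq_trans lk kn).
  have hsub := hNC i (ltn_ord i).
  have hcl s : s \in NS d p setT (p z) l -> d (p z) (p s) <= r :=
    @NS_close _ _ d _ p C' (p z) l r s (hbC z).
  set A := [set s in C | d (p y) (p s) <= 3%:R * r].
  have NA : NS d p setT (p z) l \subset A.
    apply/subsetP => s sN; rewrite inE (subsetP hsub s sN) /=.
    have := hcl s sN; have := dtri (p y) (p z) (p s); lra.
  have lA : (l <= #|A|)%N := leq_trans hN (subset_leq_card NA).
  have [a aA] : exists a, a \in A by apply/set0Pn; rewrite -card_gt0; lia.
  have [s sA smax] := @ex_maxR R _ A (fun s => d (p y) (p s)) a aA.
  move: (sA); rewrite inE => /andP[sC hs].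
  apply: le_trans hs.
  rewrite /dS; apply: bigmin_le_cond; rewrite sC /=.
  apply: (leq_trans lA); apply: subset_leq_card; apply/subsetP => t tA.
  rewrite inE; move: (tA); rewrite inE => /andP[-> _] /=; exact: smax.
- rewrite negb_exists => /forallP hfar; exfalso.
  have m0 : (0 < m)%N by rewrite /m divn_gt0.
  pose x (i : nat) : 'I_n := if (i < m)%N then q i else y.
  have sep i j : (i < j)%N -> (j <= m)%N -> 2%:R * r < d (p (x i)) (p (x j)).
    move=> ij jm; have im : (i < m)%N by apply: leq_trans ij jm.
    rewrite /x im; case: (ltnP j m) => jm'.
    + have j0 : (0 < j)%N by lia.
      have g := gz j j0 jm' y.
      have h1 : dist_prefix d p q j (p (q j)) <= d (p (q j)) (p (q i)) :=
        bigmin_le _ (Ordinal ij) (fun i0 : 'I_j => d (p (q j)) (p (q i0))).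
      have h2 : 2%:R * r < dist_prefix d p q j (p y).
        apply: lt_bigmin.
        * by have := hfar (Ordinal m0); rewrite -ltNge.
        * move=> i0 _; have := hfar (Ordinal (ltn_trans (ltn_ord i0) jm')).
          by rewrite -ltNge.
      rewrite dsym; exact: (lt_le_trans h2 (le_trans g h1)).
    + by have := hfar (Ordinal im); rewrite -ltNge dsym.
  pose D i := [set s in C' | d (p (x i)) (p s) <= r].
  have Dl i : (l <= #|D i|)%N := hbC (x i).
  have U j : (j <= m.+1)%N -> (j * l <= #|\bigcup_(i < j) D i|)%N.
    elim: j => [|j IH] hj; first by rewrite mul0n.
    rewrite big_ord_recr /= cardsU.
    have -> : \bigcup_(i < j) D i :&: D j = set0.
      apply/setP => s; rewrite in_set0 in_setI; apply/negP.
      case/andP => /bigcupP [i _ si] sj.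
      move: si sj; rewrite !inE => /andP[_ h1] /andP[_ h2].
      have := sep i j (ltn_ord i) (ltnSE hj).
      have := dtri (p (x i)) (p s) (p (x j)).
      rewrite (dsym (p s) (p (x j))); lra.
    rewrite cards0 subn0 mulSn.
    have := IH (ltnW hj); have := Dl j; move=> h1 h2; rewrite addnC; exact: leq_add h2 h1.
  have Usub : \bigcup_(i < m.+1) D i \subset C'.
    apply/bigcupsP => i _; apply/subsetP => s; rewrite inE; by case/andP.
  have := U m.+1 (leqnn _); have := subset_leq_card Usub; rewrite hC'.
  have : (k < m.+1 * l)%N by rewrite -ltn_divLR.
  lia.
Qed.
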